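(* In the cost setting described in the context, for every choice of $d^*\le D/2$ there is an instance (with minimal expected delay $d^*$) for which every algorithm has pseudo-regret $\Omega(d^* )$.
   Context: Delay-as-payoff bandit: there are $K$ arms, a horizon $T$ and a maximum delay $D$. Each arm $i$ has a distribution $\mathcal{D}_i$ on $\{0,1,\dots,D\}$; at each step $t$ the agent chooses $i_t$ based on observed feedback, a delay $d_t\sim\mathcal{D}_{i_t}$ is drawn independently and revealed only at time $t+d_t$; the payoff is the cost $c_t=d_t/D$, to be minimized. Let $\mu(i)=\mathbb{E}_{X\sim\mathcal{D}_i}[X/D]$, $\mu^*=\min_i\mu(i)$, $d^*=D\mu^*$ (the minimal expected delay over arms). Pseudo-regret: $\mathbb{E}[\sum_{t=1}^T c_t]-T\mu^*$. *)

(* Defs.v *)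
From HB Require Import structures.
From mathcomp Require Import all_boot all_order all_algebra.
Set Implicit Arguments. Unset Strict Implicit. Unset Printing Implicit Defensive.
Import Order.TTheory GRing.Theory Num.Theory.
Local Open Scope ring_scope.

Section Bandit.
Variables (R : realFieldType) (K D : nat).

Definition is_instance (nu : 'I_K -> 'I_D.+1 -> R) : Prop :=
  (forall i j, 0 <= nu i j) /\ (forall i, \sum_(j < D.+1) nu i j = 1).

(* Expected delay of arm i, i.e. D * mu(i). *)
Definition mean_delay (nu : 'I_K -> 'I_D.+1 -> R) (i : 'I_K) : R :=
  \sum_(j < D.+1) nu i j * (j : nat)%:R.

Definition min_mean_delay (nu : 'I_K -> 'I_D.+1 -> R) (dstar : R) : Prop :=
  (exists i, mean_delay nu i = dstar) /\ (forall i, dstar <= mean_delay nu i).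

(* What the agent sees at the beginning of step t, given the full history h
   of (arm, delay) pairs for steps 0..t-1: the arm played at step s is known,
   and its delay d_s is known iff it was revealed at time s + d_s < t. *)
Definition observe (t : nat) (h : seq ('I_K * 'I_D.+1))
  : seq ('I_K * option 'I_D.+1) :=
  [seq (p.2.1, if (p.1 + nat_of_ord p.2.2 < t)%N then Some p.2.2 else None)
  | p : nat * ('I_K * 'I_D.+1) <- zip (iota 0 (size h)) h].

Definition is_policy (pi : seq ('I_K * option 'I_D.+1) -> 'I_K -> R) : Prop :=
  (forall o i, 0 <= pi o i) /\ (forall o, \sum_(i < K) pi o i = 1).

Definition traj_prob (T : nat) (pi : seq ('I_K * option 'I_D.+1) -> 'I_K -> R)
  (nu : 'I_K -> 'I_D.+1 -> R) (tr : T.-tuple ('I_K * 'I_D.+1)) : R :=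
  \prod_(t < T) (pi (observe t (take t tr)) (tnth tr t).1
                 * nu (tnth tr t).1 (tnth tr t).2).

Definition total_cost (T : nat) (tr : T.-tuple ('I_K * 'I_D.+1)) : R :=
  \sum_(t < T) ((tnth tr t).2 : nat)%:R / D%:R.

Definition pseudo_regret (T : nat) (pi : seq ('I_K * option 'I_D.+1) -> 'I_K -> R)
  (nu : 'I_K -> 'I_D.+1 -> R) (dstar : R) : R :=
  \sum_(tr : T.-tuple ('I_K * 'I_D.+1)) traj_prob pi nu tr * total_cost tr
  - T%:R * (dstar / D%:R).

End Bandit.

(* Main.v *)
Require Import Defs.
From HB Require Import structures.
From mathcomp Require Import all_boot all_order all_algebra.
From mathcomp Require Import ring lra zify.
Import Order.TTheory GRing.Theory Num.Theory.
Local Open Scope ring_scope.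

Definition belast_tuple {X : Type} {T} (t : T.+1.-tuple X) : T.-tuple X :=
  @Tuple T X (belast (thead t) (behead t))
    (introT eqP (etrans (size_belast _ _) (etrans (size_behead _) (f_equal predn (size_tuple t))))).

Lemma sum_tuple_rcons (R : realFieldType) (X : finType) T (F : T.+1.-tuple X -> R) :
  \sum_(tr : T.+1.-tuple X) F tr =
  \sum_(h : T.-tuple X) \sum_(x : X) F (rcons_tuple h x).
Proof.
rewrite pair_bigA /=.
rewrite (reindex (fun p : T.-tuple X * X => rcons_tuple p.1 p.2)) //=.
exists (fun t : T.+1.-tuple X => (belast_tuple t, last (thead t) (behead t))).
- move=> [h x] _ /=.
  have E : rcons h x = thead (rcons_tuple h x) :: behead (rcons_tuple h x).
    exact: (congr1 val (tuple_eta (rcons_tuple h x))).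
  have := lastI (thead (rcons_tuple h x)) (behead (rcons_tuple h x)).
  rewrite -E => /rcons_inj [E1 E2].
  congr (_, _); last by [].
  by apply: val_inj => /=.
- move=> t _ /=. apply: val_inj => /=.
  rewrite -lastI. exact: (esym (congr1 val (tuple_eta t))).
Qed.

Lemma traj_prob_rcons (R : realFieldType) K D T pi nu (h : T.-tuple ('I_K * 'I_D.+1)) x :
  traj_prob (R:=R) pi nu (rcons_tuple h x) =
  traj_prob pi nu h * (pi (observe T h) x.1 * nu x.1 x.2).
Proof.
rewrite /traj_prob big_ord_recr /=.
have Ht : forall t : 'I_T, tnth (rcons_tuple h x) (widen_ord (leqnSn T) t) = tnth h t.
  move=> t; rewrite !(tnth_nth x) /= nth_rcons size_tuple ltn_ord //.
have Hm : tnth (rcons_tuple h x) ord_max = x.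
  by rewrite (tnth_nth x) /= nth_rcons size_tuple ltnn eqxx.
have Hk : forall t, (t <= T)%N -> take t (rcons h x) = take t h.
  by move=> t Ht'; rewrite -cats1 takel_cat // size_tuple.
congr (_ * _).
  apply: eq_bigr => t _; rewrite Ht /= Hk //; exact: ltnW.
by rewrite Hm /= Hk // take_oversize // size_tuple.
Qed.

Definition Ex {R : realFieldType} {K D : nat} (T : nat) (pi : seq ('I_K * option 'I_D.+1) -> 'I_K -> R) nu
  (f : seq ('I_K * 'I_D.+1) -> R) : R :=
  \sum_(tr : T.-tuple ('I_K * 'I_D.+1)) traj_prob pi nu tr * f tr.

Lemma Ex_step (R : realFieldType) K D T pi nu f :
  Ex (R:=R) (K:=K) (D:=D) T.+1 pi nu f =
  Ex T pi nu (fun h => \sum_(a < K) \sum_(d < D.+1)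
        pi (observe T h) a * nu a d * f (rcons h (a, d))).
Proof.
rewrite /Ex sum_tuple_rcons; apply: eq_bigr => h _.
rewrite pair_bigA /= mulr_sumr; apply: eq_bigr => x _.
by rewrite traj_prob_rcons -!mulrA -surjective_pairing.
Qed.

Lemma Ex_ext (R : realFieldType) K D T pi nu f g :
  (forall h, f h = g h) -> Ex (R:=R) (K:=K) (D:=D) T pi nu f = Ex T pi nu g.
Proof. by move=> E; apply: eq_bigr => h _; rewrite E. Qed.

Lemma ExD (R : realFieldType) K D T pi nu f g :
  Ex (R:=R) (K:=K) (D:=D) T pi nu (fun h => f h + g h) = Ex T pi nu f + Ex T pi nu g.
Proof. by rewrite /Ex -big_split; apply: eq_bigr => h _; rewrite mulrDr. Qed.

Lemma ExZ (R : realFieldType) K D T pi nu c f :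
  Ex (R:=R) (K:=K) (D:=D) T pi nu (fun h => c * f h) = c * Ex T pi nu f.
Proof. by rewrite /Ex mulr_sumr; apply: eq_bigr => h _; rewrite mulrCA. Qed.

Lemma ExN (R : realFieldType) K D T pi nu f :
  Ex (R:=R) (K:=K) (D:=D) T pi nu (fun h => - f h) = - Ex T pi nu f.
Proof. by rewrite -mulN1r -ExZ; apply: Ex_ext => h; rewrite mulN1r. Qed.

Lemma Ex_sum (R : realFieldType) K D T pi nu n (f : 'I_n -> _ -> R) :
  Ex (R:=R) (K:=K) (D:=D) T pi nu (fun h => \sum_(i < n) f i h) = \sum_(i < n) Ex T pi nu (f i).
Proof.
rewrite /Ex exchange_big /=; apply: eq_bigr => h _; by rewrite mulr_sumr.
Qed.

Lemma traj_prob_ge0 (R : realFieldType) K D T pi nu tr :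
  is_policy pi -> is_instance nu -> 0 <= traj_prob (R:=R) (K:=K) (D:=D) (T:=T) pi nu tr.
Proof.
move=> [p0 _] [n0 _]; apply: prodr_ge0 => t _; exact: mulr_ge0.
Qed.

Lemma Ex_le (R : realFieldType) K D T pi nu f g :
  is_policy pi -> is_instance nu -> (forall h, f h <= g h) ->
  Ex (R:=R) (K:=K) (D:=D) T pi nu f <= Ex T pi nu g.
Proof.
move=> hp hn H; apply: ler_sum => tr _; apply: ler_wpM2l; last exact: H.
exact: traj_prob_ge0.
Qed.

Lemma Ex1 (R : realFieldType) K D T pi nu :
  is_policy pi -> is_instance nu ->
  Ex (R:=R) (K:=K) (D:=D) T pi nu (fun _ => 1) = 1.
Proof.
move=> [p0 p1] [n0 n1]; elim: T => [|T IH].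
  rewrite /Ex; under eq_bigr do rewrite /traj_prob big_ord0 mulr1.
  by rewrite sumr_const card_tuple expn0.
rewrite Ex_step -[RHS]IH; apply: Ex_ext => h.
rewrite -[RHS](p1 (observe T h)); apply: eq_bigr => a _.
under eq_bigr do rewrite mulr1. by rewrite -mulr_sumr n1 mulr1.
Qed.

Lemma Ex_const (R : realFieldType) K D T pi nu c :
  is_policy pi -> is_instance nu ->
  Ex (R:=R) (K:=K) (D:=D) T pi nu (fun _ => c) = c.
Proof.
move=> hp hn; rewrite -[RHS]mulr1 -(@Ex1 R K D T pi nu hp hn) -ExZ; apply: Ex_ext => h; by rewrite mulr1.
Qed.

Definition costs {R : realFieldType} {K D : nat} (h : seq ('I_K * 'I_D.+1)) : R :=
  \sum_(p <- h) (p.2 : nat)%:R / D%:R.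

Lemma costs_rcons (R : realFieldType) K D (h : seq ('I_K * 'I_D.+1)) x :
  costs (R:=R) (rcons h x) = costs h + (x.2 : nat)%:R / D%:R.
Proof. by rewrite /costs -cats1 big_cat big_seq1. Qed.

Lemma Ex_cost (R : realFieldType) K D T pi nu :
  is_policy pi -> is_instance nu ->
  Ex (R:=R) (K:=K) (D:=D) T pi nu costs =
  \sum_(t < T) Ex t pi nu (fun h => \sum_(a < K) pi (observe t h) a * (mean_delay nu a / D%:R)).
Proof.
move=> hp hn; have [p0 p1] := hp; have [n0 n1] := hn.
elim: T => [|T IH].
  rewrite big_ord0 /Ex; apply: big1 => tr _; by rewrite (tuple0 tr) /costs big_nil mulr0.
rewrite Ex_step big_ord_recr /= -IH -ExD; apply: Ex_ext => h.
under eq_bigr do under eq_bigr do rewrite costs_rcons /=.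
set P := pi (observe T h).
have E : forall a, \sum_(d < D.+1) P a * nu a d * (costs h + (d : nat)%:R / D%:R)
   = costs h * P a + P a * (mean_delay nu a / D%:R).
  move=> a; rewrite /mean_delay.
  transitivity (\sum_(d < D.+1) (costs h * P a * nu a d + P a * (nu a d * (d : nat)%:R / D%:R))).
    by apply: eq_bigr => d _; ring.
  rewrite big_split /= -mulr_sumr n1 mulr1 -mulr_sumr -mulr_suml //.
rewrite (eq_bigr _ (fun a _ => E a)) big_split /= -mulr_sumr /P p1 mulr1 //.
Qed.

Lemma regret_formula (R : realFieldType) K D T pi nu dstar :
  is_policy pi -> is_instance nu ->
  pseudo_regret (R:=R) (K:=K) (D:=D) T pi nu dstar =
  \sum_(t < T) Ex t pi nu (fun h => \sum_(a < K) pi (observe t h) a * ((mean_delay nu a - dstar) / D%:R)).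
Proof.
move=> hp hn; have [p0 p1] := hp.
rewrite /pseudo_regret.
have -> : \sum_(tr : T.-tuple ('I_K * 'I_D.+1)) traj_prob pi nu tr * total_cost R tr
   = Ex T pi nu costs.
  by apply: eq_bigr => tr _; rewrite /total_cost /costs big_tuple.
have -> : T%:R * (dstar / D%:R) = \sum_(t < T) (dstar / D%:R).
  by rewrite sumr_const card_ord mulr_natl.
rewrite Ex_cost // -sumrB; apply: eq_bigr => t _.
rewrite -(@Ex_const R K D t pi nu (dstar / D%:R)) // -ExN -ExD; apply: Ex_ext => h.
rewrite -[dstar / D%:R]mulr1 -(p1 (observe t h)) mulr_sumr -sumrN -big_split /=.
apply: eq_bigr => a _; ring.
Qed.

Definition ind {R : realFieldType} {K D : nat} (m : nat) (h : seq ('I_K * 'I_D.+1)) : R :=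
  (all (fun p : 'I_K * 'I_D.+1 => (m <= p.2)%N) h)%:R.

Definition supp {R : realFieldType} {K D : nat} (m : nat) (nu : 'I_K -> 'I_D.+1 -> R) :=
  forall a (d : 'I_D.+1), (d < m)%N -> nu a d = 0.

Lemma Ex0 (R : realFieldType) K D pi nu f :
  Ex (R:=R) (K:=K) (D:=D) 0 pi nu f = f [::].
Proof.
rewrite /Ex (eq_bigr (fun _ => f [::])).
  by rewrite sumr_const card_tuple expn0.
by move=> tr _; rewrite (tuple0 tr) /traj_prob big_ord0 mul1r.
Qed.

Lemma Ex_supp (R : realFieldType) K D pi nu m :
  supp m nu -> forall t f,
  Ex (R:=R) (K:=K) (D:=D) t pi nu f = Ex t pi nu (fun h => ind m h * f h).
Proof.
move=> Hs; elim=> [|t IH] f.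
  by rewrite !Ex0 /ind /= mul1r.
rewrite !Ex_step IH [in RHS]IH; apply: Ex_ext => h.
rewrite /ind; case Hh: (all _ h); last by rewrite !mul0r.
rewrite !mul1r; apply: eq_bigr => a _; apply: eq_bigr => d _.
rewrite all_rcons /= Hh andbT; case: (leqP m d) => Hd; first by rewrite mul1r.
by rewrite Hs // mulr0 !mul0r.
Qed.

Definition noobs {K D : nat} (x : seq 'I_K) : seq ('I_K * option 'I_D.+1) :=
  map (fun a => (a, None)) x.
Definition arms {K D : nat} (h : seq ('I_K * 'I_D.+1)) : seq 'I_K := map fst h.

Lemma observe_noobs K D t m (h : seq ('I_K * 'I_D.+1)) :
  (t <= m)%N -> all (fun p : 'I_K * 'I_D.+1 => (m <= p.2)%N) h ->
  observe t h = noobs (arms h).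
Proof.
move=> Ht; rewrite /observe /noobs /arms -map_comp.
elim: h 0%N => [|x h IH] k //= /andP [Hx Hh].
rewrite IH //; congr (_ :: _).
have -> : (k + x.2 < t)%N = false.
  apply/negbTE; rewrite -leqNgt; apply: leq_trans Ht (leq_trans Hx (leq_addl k _)).
by [].
Qed.

Fixpoint Q {R : realFieldType} {K D : nat} (pi : seq ('I_K * option 'I_D.+1) -> 'I_K -> R)
  (t : nat) (g : seq 'I_K -> R) : R :=
  match t with
  | 0 => g [::]
  | t'.+1 => Q pi t' (fun x => \sum_(a < K) pi (noobs x) a * g (rcons x a))
  end.

Lemma Q_ext (R : realFieldType) K D pi t g g' :
  (forall x, g x = g' x) -> Q (R:=R) (K:=K) (D:=D) pi t g = Q pi t g'.
Proof.
elim: t g g' => [|t IH] g g' E /=; first exact: E.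
apply: IH => x; apply: eq_bigr => a _; by rewrite E.
Qed.

Lemma Q_sum (R : realFieldType) K D pi t n (g : 'I_n -> seq 'I_K -> R) :
  Q (R:=R) (K:=K) (D:=D) pi t (fun x => \sum_(i < n) g i x) = \sum_(i < n) Q pi t (g i).
Proof.
elim: t g => [|t IH] g //=.
rewrite -IH; apply: Q_ext => x.
rewrite exchange_big /=; apply: eq_bigr => a _; by rewrite mulr_sumr.
Qed.

Lemma Q1 (R : realFieldType) K D pi t :
  is_policy pi -> Q (R:=R) (K:=K) (D:=D) pi t (fun _ => 1) = 1.
Proof.
move=> [p0 p1]; elim: t => [|t IH] //=.
rewrite -[RHS]IH; apply: Q_ext => x.
under eq_bigr do rewrite mulr1. exact: p1.
Qed.

Lemma Ex_Q (R : realFieldType) K D pi nu m :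
  is_instance nu -> supp m nu -> forall t g, (t <= m)%N ->
  Ex (R:=R) (K:=K) (D:=D) t pi nu (fun h => g (arms h)) = Q pi t g.
Proof.
move=> [n0 n1] Hs; elim=> [|t IH] g Ht.
  by rewrite Ex0.
rewrite Ex_step (Ex_supp _ _ _ _ _ _ Hs) /=.
rewrite -IH; last exact: ltnW.
rewrite [in RHS](Ex_supp _ _ _ _ _ _ Hs); apply: Ex_ext => h.
rewrite /ind; case Hh: (all _ h); last by rewrite !mul0r.
rewrite !mul1r (@observe_noobs K D t m h (ltnW Ht) Hh); apply: eq_bigr => a _.
have Ea : forall d, arms (K:=K) (D:=D) (rcons h (a, d)) = rcons (arms h) a.
  by move=> d; rewrite /arms -cats1 map_cat cats1.
under eq_bigr do rewrite Ea.
by rewrite -mulr_suml -mulr_sumr n1 mulr1.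
Qed.

Lemma q_Q (R : realFieldType) K D pi nu m i :
  is_instance nu -> supp m nu -> forall t, (t <= m)%N ->
  Ex (R:=R) (K:=K) (D:=D) t pi nu (fun h => pi (observe t h) i) =
  Q pi t (fun x => pi (noobs x) i).
Proof.
move=> hn Hs t Ht.
rewrite -(Ex_Q _ _ _ _ _ _ hn Hs t (fun x => pi (noobs x) i) Ht) (Ex_supp _ _ _ _ _ _ Hs) [in RHS](Ex_supp _ _ _ _ _ _ Hs).
apply: Ex_ext => h; rewrite /ind; case Hh: (all _ h); last by rewrite !mul0r.
by rewrite (@observe_noobs K D t m h Ht Hh).
Qed.

Lemma floor_nat (R : realFieldType) (N : nat) (x : R) :
  0 <= x -> x <= N%:R -> exists m : nat, m%:R <= x /\ x < m.+1%:R.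
Proof.
elim: N x => [|N IH] x x0 xN.
  exists 0%N; split => //; apply: le_lt_trans xN _; by rewrite ltr01.
case: (lerP x N%:R) => H; first exact: IH.
case: (ltrP x N.+1%:R) => H2.
  by exists N; split => //; exact: ltW.
exists N.+1; split => //; apply: le_lt_trans xN _; by rewrite ltr_nat.
Qed.

Lemma exists_small (R : realFieldType) K (w : 'I_K -> R) :
  (0 < K)%N -> exists i, K%:R * w i <= \sum_(j < K) w j.
Proof.
move=> HK.
case: (boolP [exists i, K%:R * w i <= \sum_(j < K) w j]) => [/existsP [i Hi] | H].
  by exists i.
exfalso; move/existsPn: H => H.
have Hl : forall i, \sum_(j < K) w j < K%:R * w i by move=> i; rewrite ltNge H.
have : \sum_(i < K) \sum_(j < K) w j < \sum_(i < K) K%:R * w i.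
  apply: ltr_sum => //; apply/hasP; exists (Ordinal HK) => //; exact: mem_index_enum.
by rewrite sumr_const card_ord -mulr_sumr mulr_natl ltxx.
Qed.

Lemma sum_if (R : realFieldType) D (k : nat) (c : R) (f : 'I_D.+1 -> R) :
  (k <= D)%N ->
  \sum_(j < D.+1) (if (j : nat) == k then c else 0) * f j = c * f (inord k).
Proof.
move=> Hk; rewrite (bigD1 (inord k)) //= inordK // eqxx big1 ?addr0 //.
move=> j Hj; case: ifP => [/eqP E|_]; last by rewrite mul0r.
exfalso; move/negP: Hj; apply; apply/eqP/val_inj; by rewrite /= inordK.
Qed.

Lemma sum_if1 (R : realFieldType) D (k : nat) (c : R) :
  (k <= D)%N ->
  \sum_(j < D.+1) (if (j : nat) == k then c else 0) = c.
Proof.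
move=> Hk; rewrite -[RHS]mulr1 -(@sum_if R D k c (fun _ => 1) Hk).
by apply: eq_bigr => j _; rewrite mulr1.
Qed.

Theorem theorem2 (R : realFieldType) :
  exists c : R, 0 < c /\
  forall (K D T : nat) (dstar : R),
    (2 <= K)%N -> (0 < D)%N ->
    0 <= dstar -> dstar <= D%:R / 2 -> dstar <= T%:R ->
    forall pi : seq ('I_K * option 'I_D.+1) -> 'I_K -> R,
      is_policy pi ->
      exists nu : 'I_K -> 'I_D.+1 -> R,
        is_instance nu /\ min_mean_delay nu dstar /\
        c * dstar <= pseudo_regret T pi nu dstar.
Proof.
exists (1/4); split; first lra.
move=> K D T dstar HK HD hd0 hdD hdT pi hp.
have [p0 p1] := hp.
have Dpos : 0 < D%:R :> R by rewrite ltr0n.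
have hdD' : dstar <= D%:R by lra.
have [m [Hm1 Hm2]] := @floor_nat R D dstar hd0 hdD'.
have HmD : (m < D)%N.
  have : (m * 2)%:R <= D%:R :> R by rewrite natrM; lra.
  rewrite ler_nat; lia.
set L := minn m.+1 T.
have HL : dstar <= L%:R.
  rewrite /L /minn; case: ifP => _; [exact: ltW | exact: hdT].
set w := fun i : 'I_K => \sum_(t < L) Q pi t (fun x => pi (noobs x) i).
have Sw : \sum_(i < K) w i = L%:R.
  rewrite /w exchange_big /=.
  transitivity (\sum_(t < L) (1 : R)); last by rewrite sumr_const card_ord.
  apply: eq_bigr => t _; rewrite -Q_sum -[RHS](@Q1 R K D pi t hp).
  by apply: Q_ext => x; rewrite p1.
have [istar Hist] := @exists_small R K w (ltnW HK).
rewrite Sw in Hist.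
set p := (dstar - m%:R) / (D%:R - m%:R).
have HDm : 0 < D%:R - m%:R :> R by rewrite subr_gt0 ltr_nat.
have p_ge0 : 0 <= p by apply: divr_ge0; lra.
have p_le1 : p <= 1 by rewrite ler_pdivrMr // mul1r; lra.
pose nu := fun a (j : 'I_D.+1) =>
  if a == istar then (if (j : nat) == m then 1 - p else 0) + (if (j : nat) == D then p else 0)
  else (if (j : nat) == D then 1 else 0 : R).
have hn : is_instance nu.
  split.
    by move=> i j; rewrite /nu; do ! case: ifP => _; lra.
  move=> i; rewrite /nu; case: (i == istar).
    rewrite big_split /= (@sum_if1 R D m (1 - p) (ltnW HmD)) (@sum_if1 R D D p (leqnn D)).
    ring.
  exact: (@sum_if1 R D D 1 (leqnn D)).
have mean_star : mean_delay nu istar = dstar.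
  rewrite /mean_delay /nu eqxx.
  under eq_bigr do rewrite mulrDl.
  rewrite big_split /= (@sum_if R D m (1 - p) (fun j => (j : nat)%:R) (ltnW HmD)).
  rewrite (@sum_if R D D p (fun j => (j : nat)%:R) (leqnn D)) /= !inordK //; last by apply: ltnW.
  rewrite /p; field; by rewrite gt_eqF.
have mean_other : forall a, a != istar -> mean_delay nu a = D%:R.
  move=> a /negbTE Ha; rewrite /mean_delay /nu Ha.
  by rewrite (@sum_if R D D 1 (fun j => (j : nat)%:R) (leqnn D)) mul1r /= inordK.
have hs : supp m nu.
  move=> a d Hd; rewrite /nu.
  have -> : ((d : nat) == m) = false by apply/negbTE; rewrite neq_ltn Hd.
  have -> : ((d : nat) == D) = false.
    by apply/negbTE; rewrite neq_ltn (ltn_trans Hd HmD).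
  by case: ifP => _; rewrite ?addr0.
exists nu; split => //; split.
  split; first by exists istar.
  move=> i; case: (eqVneq i istar) => [-> | Hi]; first by rewrite mean_star.
  by rewrite mean_other.
rewrite regret_formula //.
set c0 := (D%:R - dstar) / D%:R.
pose q := fun t : nat => Ex t pi nu (fun h => pi (observe t h) istar).
have Hpt : forall t : nat,
  Ex t pi nu (fun h => \sum_(a < K) pi (observe t h) a * ((mean_delay nu a - dstar) / D%:R))
  = c0 * (1 - q t).
  move=> t.
  transitivity (Ex t pi nu (fun h => c0 * (1 + - pi (observe t h) istar))).
    apply: Ex_ext => h.
    rewrite (bigD1 istar) //= mean_star subrr mul0r mulr0 add0r.
    have E1 : 1 - pi (observe t h) istar = \sum_(a < K | a != istar) pi (observe t h) a.
      by rewrite -(p1 (observe t h)) (bigD1 istar) //= addrC addrK.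
    rewrite E1 mulr_sumr; apply: eq_bigr => a Ha; rewrite mean_other // /c0; ring.
  rewrite ExZ (ExD _ _ _ _ _ _ (fun _ => 1) (fun h => - pi (observe t h) istar)).
  by rewrite ExN Ex_const.
under eq_bigr do rewrite Hpt.
rewrite -mulr_sumr.
have pi_le1 : forall o i, pi o i <= 1.
  move=> o i; rewrite -(p1 o) (bigD1 i) //= lerDl; exact: sumr_ge0.
have a_ge0 : forall t : nat, 0 <= 1 - q t.
  move=> t; rewrite subr_ge0 /q -(@Ex1 R K D t pi nu hp hn); apply: Ex_le => // h.
have HLT : (L <= T)%N by apply: geq_minr.
have Hsum : \sum_(t < L) (1 - q t) <= \sum_(t < T) (1 - q t).
  rewrite (big_ord_widen T (fun t => 1 - q t) HLT).
  rewrite [X in _ <= X](bigID (fun t : 'I_T => (t < L)%N)) /= lerDl.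
  by apply: sumr_ge0 => t _.
have HsL : \sum_(t < L) (1 - q t) = L%:R - w istar.
  rewrite sumrB sumr_const card_ord /w; congr (_ - _); apply: eq_bigr => t _.
  have Ht : (t <= m)%N.
    have := leq_trans (ltn_ord t) (geq_minl m.+1 T); by rewrite ltnS.
  exact: (@q_Q R K D pi nu m istar hn hs t Ht).
have HK2 : 2 <= K%:R :> R by rewrite (ler_nat R 2 K).
have HL0 : 0 <= L%:R :> R by apply: ler0n.
have Hw : w istar <= L%:R / 2.
  case: (lerP 0 (w istar)) => Hw0; last by lra.
  have : 2 * w istar <= K%:R * w istar by apply: ler_wpM2r.
  lra.
have c0_ge : 1 / 2 <= c0.
  have -> : c0 = 1 - dstar / D%:R by rewrite /c0 mulrBl divff ?gt_eqF.
  have : dstar / D%:R <= 1 / 2 by rewrite ler_pdivrMr //; lra.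
  lra.
set S := \sum_(t < T) (1 - q t).
have HS : dstar / 2 <= S by rewrite /S; lra.
apply: le_trans (_ : 1 / 2 * S <= c0 * S); first by lra.
apply: ler_wpM2r => //; lra.
Qed.
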